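(* Let $f:A\to B$ be a homomorphism of commutative rings such that every ideal of $B$ is of the form $f(\mathfrak{a})B$ for some ideal $\mathfrak{a}\subseteq A$, and let $\sigma$ be a hereditary torsion theory on $A$-modules such that $A$ is totally $\sigma$-artinian. Then $B$ is totally $f(\sigma)$-artinian.
   Context: $\mathcal{L}(\sigma)$ is the Gabriel filter of $\sigma$. $f(\sigma)$ is the hereditary torsion theory on $B$-modules with Gabriel filter $\mathcal{L}(f(\sigma))=\{\mathfrak{b}\subseteq B: f^{-1}(\mathfrak{b})\in\mathcal{L}(\sigma)\}$ (a $B$-module is $f(\sigma)$-torsion iff it is $\sigma$-torsion as an $A$-module). A ring $R$ with hereditary torsion theory $\tau$ is totally $\tau$-artinian if for every descending chain of ideals $\mathfrak{a}_1\supseteq\mathfrak{a}_2\supseteq\cdots$ there exist $m$ and $\mathfrak{h}\in\mathcal{L}(\tau)$ with $\mathfrak{a}_m\mathfrak{h}\subseteq\mathfrak{a}_s$ for all $s\ge m$. *)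

(* Defs.v *)
From mathcomp Require Import all_boot all_order all_algebra.
Set Implicit Arguments. Unset Strict Implicit. Unset Printing Implicit Defensive.
Import GRing.Theory.
Local Open Scope ring_scope.

Definition is_ideal (R : comPzRingType) (I : R -> Prop) : Prop :=
  [/\ I 0, (forall x y, I x -> I y -> I (x + y)) & (forall r x, I x -> I (r * x))].

Definition subid (R : comPzRingType) (I J : R -> Prop) : Prop := forall x, I x -> J x.

Definition colon (R : comPzRingType) (I : R -> Prop) (x : R) : R -> Prop :=
  fun r => I (r * x).

Definition idealMul (R : comPzRingType) (I J : R -> Prop) : R -> Prop :=
  fun x => exists s : seq (R * R),
    (forall p, p \in s -> I p.1 /\ J p.2) /\ x = \sum_(p <- s) p.1 * p.2.

Definition extIdeal (A B : comPzRingType) (f : {rmorphism A -> B}) (I : A -> Prop)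
  : B -> Prop :=
  fun y => exists s : seq (A * B),
    (forall p, p \in s -> I p.1) /\ y = \sum_(p <- s) f p.1 * p.2.

(* A hereditary torsion theory on R-modules is determined by (and in bijection
   with) its Gabriel filter L; we represent the torsion theory by L
   (Stenström's axioms T1-T4 for a Gabriel topology). *)
Definition gabriel_filter (R : comPzRingType) (L : (R -> Prop) -> Prop) : Prop :=
  [/\ (forall a, L a -> is_ideal a),
      L (fun _ => True),
      (forall a b, L a -> is_ideal b -> subid a b -> L b),
      (forall a x, L a -> L (colon a x)) &
      (forall a b, L a -> is_ideal b -> (forall x, a x -> L (colon b x)) -> L b)].

(* Gabriel filter of f(sigma): { b ideal of B | f^{-1}(b) \in L(sigma) }. *)
Definition push_filter (A B : comPzRingType) (f : {rmorphism A -> B})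
  (L : (A -> Prop) -> Prop) : (B -> Prop) -> Prop :=
  fun b => is_ideal b /\ L (fun x => b (f x)).

Definition totally_artinian (R : comPzRingType) (L : (R -> Prop) -> Prop) : Prop :=
  forall a : nat -> (R -> Prop),
    (forall n, is_ideal (a n)) ->
    (forall n, subid (a n.+1) (a n)) ->
    exists m, exists h, L h /\
      forall s, (m <= s)%N -> subid (idealMul (a m) h) (a s).

(* Main.v *)
Require Import Defs.
From mathcomp Require Import all_boot all_order all_algebra.
Import GRing.Theory.
Local Open Scope ring_scope.

Lemma ideal_sum (R : comPzRingType) (I : R -> Prop) (T : eqType) (s : seq T) (F : T -> R) :
  is_ideal I -> (forall p, p \in s -> I (F p)) -> I (\sum_(p <- s) F p).
Proof.
move=> [I0 ID IM]; elim: s => [|x s IH] H; first by rewrite big_nil.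
rewrite big_cons; apply: ID; first by apply: H; rewrite inE eqxx.
by apply: IH => p ps; apply: H; rewrite inE ps orbT.
Qed.

Lemma ext_ideal (A B : comPzRingType) (f : {rmorphism A -> B}) (I : A -> Prop) :
  is_ideal (extIdeal f I).
Proof.
split.
- by exists [::]; split => //; rewrite big_nil.
- move=> x y [s [Hs ->]] [t [Ht ->]]; exists (s ++ t); split; last by rewrite big_cat.
  by move=> p; rewrite mem_cat => /orP [/Hs|/Ht].
- move=> r x [s [Hs ->]]; exists [seq (p.1, r * p.2) | p <- s]; split.
  + move=> p /mapP [q qs ->] /=. exact: (Hs q qs).
  + rewrite big_map mulr_sumr; apply: eq_bigr => p _ /=.
    by rewrite mulrA [r * _]mulrC -mulrA.
Qed.

Theorem mainTheorem9 (A B : comPzRingType) (f : {rmorphism A -> B})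
  (L : (A -> Prop) -> Prop) :
  (forall b : B -> Prop, is_ideal b ->
     exists a : A -> Prop, is_ideal a /\ forall y, b y <-> extIdeal f a y) ->
  gabriel_filter L ->
  totally_artinian L ->
  totally_artinian (push_filter f L).
Proof.
move=> Hext [LI Ltop Lup Lcol Lcomp] HA b bI bD.
pose a n := fun x => b n (f x).
have aI : forall n, is_ideal (a n).
  move=> n; case: (bI n) => b0 bD' bM; split.
  - by rewrite /a rmorph0.
  - by move=> x y; rewrite /a rmorphD; apply: bD'.
  - by move=> r x; rewrite /a rmorphM; apply: bM.
have aD : forall n, subid (a n.+1) (a n) by move=> n x; apply: bD.
have [m [h [Lh Hmh]]] := HA a aI aD.
exists m, (extIdeal f h); split.
  split; first exact: ext_ideal.
  apply: (Lup h); [exact: Lh| |].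
  - case: (@ext_ideal _ _ f h) => e0 eD eM; split.
    + by rewrite rmorph0.
    + by move=> x y; rewrite rmorphD; apply: eD.
    + by move=> r x; rewrite rmorphM; apply: eM.
  - move=> x hx; exists [:: (x, 1)]; split.
    + by move=> p; rewrite inE => /eqP ->.
    + by rewrite big_seq1 mulr1.
have bm : forall y, b m y -> extIdeal f (a m) y.
  have [am [amI Ham]] := Hext (b m) (bI m).
  move=> y /Ham [s [Hs ->]]; exists s; split => // p ps.
  rewrite /a; apply/Ham; exists [:: (p.1, 1)]; split.
  - by move=> q; rewrite inE => /eqP -> /=; apply: Hs.
  - by rewrite big_seq1 mulr1.
move=> s ms y [t [Ht ->]].
have bsI := bI s; case: (bI s) => _ _ bsM.
apply: ideal_sum => // p pt.
have [/bm [u [Hu ->]] [w [Hw ->]]] := Ht p pt.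
rewrite mulr_suml; apply: ideal_sum => // q qu.
rewrite [f _ * _]mulrC -mulrA; apply: (bsM).
rewrite mulr_sumr; apply: ideal_sum => // r rw.
rewrite mulrA mulrC; apply: (bsM).
rewrite -rmorphM; apply: (Hmh s ms).
exists [:: (q.1, r.1)]; split.
- by move=> z; rewrite inE => /eqP -> /=; split; [apply: Hu|apply: Hw].
- by rewrite big_seq1.
Qed.
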